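(* Let $B$ be a $d\times d$ integral matrix with $|\det(B)|=2$. Then there exist natural numbers $p\le d$, $n_0$, $m_0$ and a row vector $\vec r=[r_1,\dots,r_{p-1},0,\dots,0]$ with $r_j\in\{0,1\}$ such that $$B=L^{(p)}_{\vec r}D_pV,\qquad B=I_{pd}M^{(p)}_{\vec r}D_dU,\qquad B=V_1V_2\cdots V_{n_0}D_dU_1U_2\cdots U_{m_0},$$ where $V,U\in\mathfrak M$ and $V_j,U_i\in\mathfrak G$.
   Context: $I$ is the $d\times d$ identity; $\Delta_{ij}$ is the $d\times d$ matrix with $1$ in position $(i,j)$ and $0$ elsewhere; $I_{ij}$ is the matrix obtained from $I$ by interchanging columns $i$ and $j$ (so $I_{ii}=I$); $D_p=I+\Delta_{pp}$; $S_p=I-2\Delta_{pp}$. $\mathfrak M$ is the group of $d\times d$ integral matrices with determinant $\pm1$, and $\mathfrak G=\{S_p\}\cup\{I\pm\Delta_{ij}:i\ne j\}\cup\{I_{ij}\}$ (elementary matrices). For $\vec r=[r_1,\dots,r_{p-1},0,\dots,0]$: $L^{(p)}_{\vec r}=I+\sum_{j=1}^{p-1}r_j\Delta_{pj}$ and $M^{(p)}_{\vec r}=I+\sum_{j=1}^{p-1}r_j\Delta_{dj}$. *)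

(* Defs.v *)
From HB Require Import structures.
From mathcomp Require Import all_boot all_order all_algebra.
Set Implicit Arguments. Unset Strict Implicit. Unset Printing Implicit Defensive.
Import Order.TTheory GRing.Theory Num.Theory.
Local Open Scope ring_scope.

(* Indices are 0-based: the paper's index k (1 <= k <= d) is the ordinal k-1 : 'I_d. *)

Lemma ord_last_proof {d : nat} (i : 'I_d) : (d.-1 < d)%N.
Proof. by rewrite ltn_predL (leq_ltn_trans (leq0n i) (ltn_ord i)). Qed.

(* the last index d (0-based: d-1), built from any inhabitant of 'I_d *)
Definition ord_last {d : nat} (i : 'I_d) : 'I_d := Ordinal (ord_last_proof i).

Definition Delta {d : nat} (i j : 'I_d) : 'M[int]_d := delta_mx i j.
Definition Iswap {d : nat} (i j : 'I_d) : 'M[int]_d := xcol i j 1%:M.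
Definition Dmx {d : nat} (p : 'I_d) : 'M[int]_d := 1%:M + Delta p p.
Definition Smx {d : nat} (p : 'I_d) : 'M[int]_d := 1%:M - 2%:R *: Delta p p.

Definition Lmx {d : nat} (p : 'I_d) (r : 'I_d -> int) : 'M[int]_d :=
  1%:M + \sum_(j < d | (j < p)%N) r j *: Delta p j.
Definition Mmx {d : nat} (p : 'I_d) (r : 'I_d -> int) : 'M[int]_d :=
  1%:M + \sum_(j < d | (j < p)%N) r j *: Delta (ord_last p) j.

Definition inMfrak {d : nat} (A : 'M[int]_d) : Prop := \det A = 1 \/ \det A = -1.

Definition inGfrak {d : nat} (A : 'M[int]_d) : Prop :=
  (exists p : 'I_d, A = Smx p)
  \/ (exists i j : 'I_d, i != j /\ (A = 1%:M + Delta i j \/ A = 1%:M - Delta i j))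
  \/ (exists i j : 'I_d, A = Iswap i j).

Definition mxprod {d n : nat} (A : 'I_n -> 'M[int]_d) : 'M[int]_d :=
  \big[mulmx/1%:M]_(i < n) A i.

(* Main.v *)
Require Import Defs.
From HB Require Import structures.
From mathcomp Require Import all_boot all_order all_algebra.
From mathcomp Require Import perm ring zify.
Import Order.TTheory GRing.Theory Num.Theory.
Local Open Scope ring_scope.

Set Implicit Arguments. Unset Strict Implicit.

Lemma mulE1 {d : nat} (A : 'M[int]_d) (i j a b : 'I_d) :
  (A *m delta_mx i j) a b = A a i * (b == j)%:R.
Proof.
rewrite mxE (bigD1 i) //= big1 ?addr0; first by rewrite mxE eqxx.
by move=> c /negPf ci; rewrite mxE ci mulr0.
Qed.

Lemma mulE_sum {d : nat} (A : 'M[int]_d) (i : 'I_d) (P : pred 'I_d) (c : 'I_d -> int) a b :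
  (A *m (1%:M + \sum_(l | P l) c l *: delta_mx i l)) a b
   = A a b + (P b)%:R * c b * A a i.
Proof.
rewrite mulmxDr mulmx1 mulmx_sumr mxE summxE; congr (_ + _).
rewrite big_mkcond (bigD1 b) //= big1 ?addr0.
  case: (P b) => /=; [|by rewrite !mul0r].
  by rewrite -(scalemxAr (c b) A) mxE mulE1 eqxx mulr1 mul1r mulrC.
move=> l /negPf lb; case: (P l) => //.
by rewrite -(scalemxAr (c l) A) mxE mulE1 eq_sym lb !mulr0.
Qed.

Lemma mulE2 {d : nat} (A : 'M[int]_d) (i j : 'I_d) (c : int) a b :
  (A *m (1%:M + c *: delta_mx i j)) a b = A a b + (b == j)%:R * c * A a i.
Proof.
have -> : c *: delta_mx i j = \sum_(l | l == j) c *: delta_mx i l :> 'M[int]_d.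
  by rewrite big_pred1_eq.
rewrite (mulE_sum A i (pred1 j) (fun=> c)) //.
Qed.

Lemma mulEsw {d : nat} (A : 'M[int]_d) (i j : 'I_d) a b :
  (A *m Iswap i j) a b = A a (tperm i j b).
Proof. by rewrite /Iswap xcolE mul1mx -xcolE /xcol /col_perm mxE. Qed.

Lemma Smx_E {d : nat} (p : 'I_d) : Smx p = 1%:M + (-2) *: delta_mx p p.
Proof. by rewrite /Smx /Delta scaleNr. Qed.

Lemma oneE {d : nat} (a b : 'I_d) : (1%:M : 'M[int]_d) a b = (a == b)%:R.
Proof. by rewrite mxE. Qed.

Lemma unit_int (x y : int) : x * y = 1 -> x = 1 \/ x = -1.
Proof.
move=> h; have := congr1 absz h; rewrite abszM /= => /eqP; rewrite muln_eq1.
by case/andP=> /eqP hx _; case: x {h} hx => [[|[|n]]|[|n]] //= _; auto.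
Qed.

Lemma sclAl {d : nat} (c : int) (A B : 'M[int]_d) : (c *: A) *m B = c *: (A *m B).
Proof. by rewrite scalemxAl. Qed.
Lemma sclAr {d : nat} (c : int) (A B : 'M[int]_d) : A *m (c *: B) = c *: (A *m B).
Proof. by rewrite scalemxAr. Qed.

Definition gprod {d : nat} (s : seq 'M[int]_d) := foldr mulmx 1%:M s.
Definition gen {d : nat} (Q : 'M[int]_d) :=
  exists s, (forall M, M \in s -> inGfrak M) /\ Q = gprod s.

Lemma gen1 {d : nat} : gen (1%:M : 'M[int]_d).
Proof. by exists [::]. Qed.

Lemma genG {d : nat} (M : 'M[int]_d) : inGfrak M -> gen M.
Proof.
by move=> h; exists [:: M]; split; [move=> N; rewrite inE => /eqP->|rewrite /= mulmx1].
Qed.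

Lemma gprod_cat {d : nat} (s1 s2 : seq 'M[int]_d) : gprod (s1 ++ s2) = gprod s1 *m gprod s2.
Proof. by elim: s1 => [|M s IH] /=; rewrite ?mul1mx // IH mulmxA. Qed.

Lemma genM {d : nat} (P Q : 'M[int]_d) : gen P -> gen Q -> gen (P *m Q).
Proof.
move=> [s1 [h1 ->]] [s2 [h2 ->]]; exists (s1 ++ s2); split; last by rewrite gprod_cat.
by move=> M; rewrite mem_cat => /orP[/h1|/h2].
Qed.

Lemma inv_elem {d : nat} (M : 'M[int]_d) : inGfrak M ->
  exists M', inGfrak M' /\ M *m M' = 1%:M.
Proof.
case=> [[p ->]|[[i [j [ij [->|->]]]]|[i [j ->]]]].
- exists (Smx p); split; first by left; exists p.
  apply/matrixP=> a b; rewrite {2}Smx_E mulE2 /Smx /Delta !mxE.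
  by case: (a =P p) => [->|/eqP/negPf ap]; case: (b =P p) => [->|/eqP/negPf bp];
     rewrite ?eqxx ?ap ?bp ?(eq_sym p) ?ap ?bp /=; rewrite ?mulr0 ?mulr1 ?mul0r ?mul1r ?subr0 ?addr0 ?add0r.
- exists (1%:M - Delta i j); split; first by right; left; exists i, j; auto.
  apply/matrixP=> a b; rewrite /Delta -scaleN1r mulE2 /Delta !mxE (negPf ij).
  by rewrite andbF addr0; case: (a == b); case: (a == i); case: (b == j).
- exists (1%:M + Delta i j); split; first by right; left; exists i, j; auto.
  apply/matrixP=> a b; rewrite /Delta -[delta_mx i j]scale1r mulE2 !mxE (negPf ij).
  by rewrite andbF addr0; case: (a == b); case: (a == i); case: (b == j).
- exists (Iswap i j); split; first by right; right; exists i, j.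
  by apply/matrixP=> a b; rewrite mulEsw /Iswap /xcol /col_perm !mxE tpermK.
Qed.

Lemma mul_delta_add {d : nat} (i j : 'I_d) (x y : int) : i != j ->
  (1%:M + x *: delta_mx i j) *m (1%:M + y *: delta_mx i j) = 1%:M + (x + y) *: delta_mx i j.
Proof.
move=> ij; apply/matrixP=> a b; rewrite mulE2 !mxE (negPf ij) andbF mulr0 addr0.
by case: (a == b); case: (a == i); case: (b == j); rewrite /=; ring.
Qed.

Lemma gen_delta {d : nat} (i j : 'I_d) (c : int) : i != j -> gen (1%:M + c *: delta_mx i j).
Proof.
move=> ij.
have base : forall n : nat, gen (1%:M + (n%:Z) *: delta_mx i j) /\ gen (1%:M + (- n%:Z) *: delta_mx i j).
  elim=> [|n [IH1 IH2]]; first by rewrite oppr0 scale0r addr0; split; apply: gen1.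
  split.
    rewrite -addn1 PoszD -mul_delta_add //; apply: genM => //; apply: genG.
    by right; left; exists i, j; split=> //; left; rewrite scale1r.
  rewrite -addn1 PoszD opprD -mul_delta_add //; apply: genM => //; apply: genG.
  by right; left; exists i, j; split=> //; right; rewrite scaleN1r.
case: c => n; first by case: (base n).
by rewrite NegzE; case: (base n.+1).
Qed.

Lemma gen_inv {d : nat} (Q : 'M[int]_d) : gen Q -> exists Q', gen Q' /\ Q *m Q' = 1%:M.
Proof.
move=> [s [hs ->]]; elim: s hs => [|M s IH] hs /=; first by exists 1%:M; split; [apply: gen1|rewrite mulmx1].
have [Q' [g' e']] := IH (fun N hN => hs N (mem_behead (s:=M :: s) hN)).
have [M' [gM eM]] := inv_elem (hs M (mem_head _ _)).
exists (Q' *m M'); split; first by apply: genM => //; apply: genG.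
by rewrite mulmxA -(mulmxA M) e' mulmx1 eM.
Qed.

Lemma gen_det {d : nat} (Q : 'M[int]_d) : gen Q -> inMfrak Q.
Proof.
move=> /gen_inv [Q' [_ e]]; apply: (@unit_int _ (\det Q')).
by rewrite -det_mulmx e det1.
Qed.

Lemma gen_sum {d : nat} (i : 'I_d) (P : pred 'I_d) (c : 'I_d -> int) : P i = false ->
  gen (1%:M + \sum_(l | P l) c l *: delta_mx i l).
Proof.
move=> Pi.
pose K (X : 'M[int]_d) := gen (1%:M + X) /\ forall l : 'I_d, X *m delta_mx i l = 0.
suff [] : K (\sum_(l | P l) c l *: delta_mx i l) by [].
apply: big_rec; first by split; [rewrite addr0; apply: gen1|move=> l; rewrite mul0mx].
move=> l X Pl [gX hX].
have li : l != i by apply: contraTneq Pl => ->; rewrite Pi.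
have hD : forall l', (c l *: Delta i l) *m Delta i l' = 0.
  by move=> l'; rewrite sclAl mul_delta_mx_0 ?scaler0.
split; last by move=> l'; rewrite mulmxDl hX hD addr0.
have -> : 1%:M + (c l *: delta_mx i l + X) = (1%:M + X) *m (1%:M + c l *: delta_mx i l).
  rewrite mulmxDr mulmx1 mulmxDl mul1mx sclAr hX scaler0 addr0.
  by rewrite addrAC addrA.
by apply: genM => //; apply: gen_delta; rewrite eq_sym.
Qed.

Lemma absdec (x y : int) : y != 0 -> (absz y <= absz x)%N ->
  (absz ((x + (if (0 <= y) == (0 <= x) then -1 else 1) * y)%R) < absz x)%N.
Proof.
move=> y0 h.
case: (lerP 0 y) => hy; case: (lerP 0 x) => hx /=; move: h y0; lia.
Qed.

Definition P1concl {d : nat} (k : 'I_d) (A B : 'M[int]_d) :=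
   (forall m l : 'I_d, (l < k)%N -> B m l = A m l) /\
   (forall m l : 'I_d, (m < k)%N -> (k <= l)%N -> B m l = 0) /\
   (forall l : 'I_d, (k < l)%N -> B k l = 0) /\
   0 <= B k k.

Lemma finish1 {d : nat} (k : 'I_d) (A : 'M[int]_d) :
  (forall m l : 'I_d, (m < k)%N -> (k <= l)%N -> A m l = 0) ->
  (forall l : 'I_d, (k < l)%N -> A k l = 0) ->
  exists Q, gen Q /\ P1concl k A (A *m Q).
Proof.
move=> h1 h2; case: (lerP 0 (A k k)) => hk.
  exists 1%:M; split; first exact: gen1.
  by rewrite mulmx1; split=> //; split=> //.
exists (Smx k); split; first by apply: genG; left; exists k.
have E : forall a b, (A *m Smx k) a b = A a b + (b == k)%:R * (-2) * A a k.
  by move=> a b; rewrite Smx_E mulE2.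
split; [|split; [|split]].
- move=> m l lk; rewrite E; case: eqP => [e|_]; last by rewrite !mul0r addr0.
  by move: lk; rewrite e ltnn.
- move=> m l mk kl; rewrite E h1 // h1 // ?leqnn; ring.
- move=> l kl; rewrite E h2 //; case: eqP => [e|_]; last by rewrite !mul0r addr0.
  by move: kl; rewrite e ltnn.
- rewrite E eqxx; lia.
Qed.

Lemma P1_comp {d : nat} (k : 'I_d) (A Q1 Q2 : 'M[int]_d) :
  gen Q1 -> gen Q2 ->
  (forall m l : 'I_d, (l < k)%N -> (A *m Q1) m l = A m l) ->
  P1concl k (A *m Q1) (A *m Q1 *m Q2) ->
  exists Q, gen Q /\ P1concl k A (A *m Q).
Proof.
move=> g1 g2 e [c1 [c2 [c3 c4]]]; exists (Q1 *m Q2); split; first exact: genM.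
rewrite mulmxA; split=> //; move=> m l lk; rewrite c1 // e //.
Qed.

Lemma swap1 {d : nat} (k : 'I_d) (A : 'M[int]_d) (i : 'I_d) :
  (forall m l : 'I_d, (m < k)%N -> (k <= l)%N -> A m l = 0) ->
  (k < i)%N -> A k k = 0 ->
  (forall l : 'I_d, (k <= l)%N -> l != i -> A k l = 0) ->
  exists Q, gen Q /\ P1concl k A (A *m Q).
Proof.
move=> h1 ki hkk h2.
have ik : i != k by apply: contraTneq ki => ->; rewrite ltnn.
have E : forall a b, (A *m Iswap k i) a b = A a (tperm k i b) by move=> a b; rewrite mulEsw.
have g1 : gen (Iswap k i) by apply: genG; right; right; exists k, i.
have e1 : forall m l : 'I_d, (l < k)%N -> (A *m Iswap k i) m l = A m l.
  move=> m l lk; rewrite E; case: tpermP => [e|e|//]; move: lk; rewrite e.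
    by rewrite ltnn.
  by move/(ltn_trans ki); rewrite ltnn.
have [Q2 [g2 c]] : exists Q2, gen Q2 /\ P1concl k (A *m Iswap k i) (A *m Iswap k i *m Q2).
  apply: finish1.
    move=> m l mk kl; rewrite E; apply: h1 => //.
    by case: tpermP => [_|_|_ _] //; exact: ltnW.
  move=> l kl; rewrite E; case: tpermP => [e|e|lk li].
  - by move: kl; rewrite e ltnn.
  - exact: hkk.
  - by apply: h2; [exact: (ltnW kl)|apply/eqP].
exact: (P1_comp g1 g2 e1 c).
Qed.

Lemma phase1 {d : nat} (k : 'I_d) (A : 'M[int]_d) :
  (forall m l : 'I_d, (m < k)%N -> (k <= l)%N -> A m l = 0) ->
  exists Q, gen Q /\ P1concl k A (A *m Q).
Proof.
pose mu (X : 'M[int]_d) := (\sum_(l : 'I_d | (k <= l)%N) absz (X k l))%N.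
suff H : forall n X, (mu X < n)%N ->
  (forall m l : 'I_d, (m < k)%N -> (k <= l)%N -> X m l = 0) ->
  exists Q, gen Q /\ P1concl k X (X *m Q) by apply: (H (mu A).+1).
elim=> [//|n IH] X hmu h1.
case: (boolP [exists i : 'I_d, exists j : 'I_d,
   [&& (k <= i)%N, (k <= j)%N, i != j, X k i != 0 & X k j != 0]]).
- move=> /existsP[i /existsP[j /and5P[ki kj ij xi xj]]].
  have [i0 [j0 [ki0 [kj0 [ij0 [xi0 hle]]]]]] : exists i0 j0 : 'I_d,
     (k <= i0)%N /\ (k <= j0)%N /\ i0 != j0 /\ X k i0 != 0 /\
     (absz (X k i0) <= absz (X k j0))%N.
    case: (leqP (absz (X k i)) (absz (X k j))) => h.
      by exists i, j.
    by exists j, i; rewrite eq_sym; do !split=> //; apply: ltnW.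
  pose c : int := (if (0 <= X k i0) == (0 <= X k j0) then -1 else 1).
  pose Q1 : 'M[int]_d := 1%:M + c *: delta_mx i0 j0.
  have E : forall a b, (X *m Q1) a b = X a b + (b == j0)%:R * c * X a i0.
    by move=> a b; rewrite mulE2.
  have g1 : gen Q1 by apply: gen_delta.
  have e1 : forall m l : 'I_d, (l < k)%N -> (X *m Q1) m l = X m l.
    move=> m l lk; rewrite E; case: eqP => [e|_]; last by rewrite !mul0r addr0.
    by move: kj0; rewrite -e leqNgt lk.
  have hmu' : (mu (X *m Q1) < n)%N.
    rewrite -ltnS; apply: leq_trans hmu; rewrite ltnS.
    rewrite /mu (bigD1 j0 kj0) [X in (_ < X)%N](bigD1 j0 kj0) /=.
    have -> : (\sum_(l : 'I_d | (k <= l)%N && (l != j0)) absz ((X *m Q1) k l) =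
               \sum_(l : 'I_d | (k <= l)%N && (l != j0)) absz (X k l))%N.
      apply: eq_bigr => l /andP[_ /negPf lj]; rewrite E lj !mul0r addr0 //.
    rewrite ltn_add2r E eqxx mul1r; apply: absdec => //.
  have h1' : forall m l : 'I_d, (m < k)%N -> (k <= l)%N -> (X *m Q1) m l = 0.
    move=> m l mk kl; rewrite E !h1 //; ring.
  have [Q2 [g2 c2]] := IH (X *m Q1) hmu' h1'.
  exact: (P1_comp g1 g2 e1 c2).
- move=> /existsPn hno.
  have hno2 : forall i j : 'I_d, (k <= i)%N -> (k <= j)%N -> i != j -> X k i != 0 -> X k j = 0.
    move=> i j ki kj ij xi; apply/eqP; apply: contraNT (hno i) => xj.
    by apply/existsP; exists j; rewrite ki kj ij xi xj.
  case: (boolP [exists i : 'I_d, (k < i)%N && (X k i != 0)]).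
  + move=> /existsP[i /andP[ki xi]].
    have ik : i != k by apply: contraTneq ki => ->; rewrite ltnn.
    apply: (swap1 (i := i)) => //.
      by apply: (hno2 i) => //; exact: ltnW.
    move=> l kl li; apply: (hno2 i) => //; [exact: ltnW|by rewrite eq_sym].
  + move=> /existsPn hz; apply: finish1 => // l kl.
    by move: (hz l); rewrite kl /= negbK => /eqP.
Qed.

Lemma phase2 {d : nat} (k : 'I_d) (A : 'M[int]_d) :
  (forall m : 'I_d, (m < k)%N -> A m k = 0) ->
  exists Q, gen Q /\ (forall m l : 'I_d, (m < k)%N -> (A *m Q) m l = A m l) /\
     (forall m l : 'I_d, (k <= l)%N -> (A *m Q) m l = A m l) /\
     (forall l : 'I_d, (l < k)%N -> 0 < A k k -> 0 <= (A *m Q) k l < A k k).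
Proof.
move=> h0; case: (lerP (A k k) 0) => hg.
  exists 1%:M; split; first exact: gen1.
  by rewrite mulmx1; do !split=> // l _; rewrite ltNge hg.
pose c (l : 'I_d) : int := - ((A k l %/ A k k)%Z).
pose P := (fun l : 'I_d => (l < k)%N).
exists (1%:M + \sum_(l | P l) c l *: delta_mx k l); split.
  by apply: gen_sum; rewrite /P ltnn.
have E := mulE_sum A k P c.
split; [|split].
- by move=> m l mk; rewrite E h0 // mulr0 addr0.
- by move=> m l kl; rewrite E /P ltnNge kl /= !mul0r addr0.
- move=> l lk _; rewrite E /P lk /c mul1r mulNr.
  have hne : A k k != 0 by rewrite gt_eqF.
  rewrite {1 3}(divz_eq (A k l) (A k k)) addrAC subrr add0r.
  by rewrite modz_ge0 // ltz_pmod.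
Qed.

Definition Inv {d : nat} (k : nat) (H : 'M[int]_d) := forall m l : 'I_d, (m < k)%N ->
  ((m < l)%N -> H m l = 0) /\ 0 <= H m m /\ ((l < m)%N -> 0 < H m m -> 0 <= H m l < H m m).

Lemma loop {d : nat} (k : nat) : (k <= d)%N -> forall A : 'M[int]_d,
  exists Q, gen Q /\ Inv k (A *m Q).
Proof.
elim: k => [|k IH] hk A.
  by exists 1%:M; split; [exact: gen1|move=> m l].
have [Q0 [g0 I0]] := IH (ltnW hk) A.
pose kk : 'I_d := Ordinal hk.
set H := A *m Q0 in I0.
have [Q1 [g1 [c1 [c2 [c3 c4]]]]] := phase1 (k := kk) (A := H)
   (fun m l mk kl => (I0 m l mk).1 (leq_trans mk kl)).
set H1 := H *m Q1 in c1 c2 c3 c4.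
have rows : forall m l : 'I_d, (m < k)%N -> H1 m l = H m l.
  move=> m l mk; case: (ltnP l k) => lk; first exact: c1.
  by rewrite c2 // (I0 m l mk).1 // (leq_trans mk lk).
have [Q2 [g2 [d1 [d2 d3]]]] := phase2 (k := kk) (A := H1) (fun m mk => c2 m kk mk (leqnn k)).
exists (Q0 *m Q1 *m Q2); split; first by apply: genM => //; apply: genM.
rewrite !mulmxA -/H -/H1.
move=> m l; rewrite ltnS leq_eqVlt => /orP[/eqP mk|mk].
  have -> : m = kk by apply: val_inj.
  split; [|split].
  - by move=> kl; rewrite d2 ?c3 //; apply: ltnW.
  - by rewrite d2 ?leqnn.
  - by move=> lk; rewrite d2 ?leqnn //; apply: d3.
rewrite !d1 // !rows //; exact: I0.
Qed.

Lemma xy2 (x y : int) : 0 <= x -> 0 <= y -> x * y = 2 -> x = 1 \/ x = 2.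
Proof.
case: x => [a|//]; case: y => [b|//] _ _ /=.
rewrite -PoszM => -[] h.
have : (a %| 2)%N by apply/dvdnP; exists b; rewrite mulnC; lia.
case: a {h} => [|[|[|a]]] //; auto.
Qed.

Lemma diag2 {d : nat} (D : 'I_d -> int) : (forall i, 0 <= D i) -> \prod_i D i = 2 ->
  exists p, D p = 2 /\ forall j, j != p -> D j = 1.
Proof.
move=> h0 h2.
have h12 : forall i, D i = 1 \/ D i = 2.
  move=> i; move: h2; rewrite (bigD1 i) //=.
  have : 0 <= \prod_(j | j != i) D j by apply: prodr_ge0 => j _; exact: h0.
  have := h0 i.
  move=> a b; exact: xy2.
have [p hp] : exists p, D p != 1.
  apply/existsP; apply: contraT; rewrite negb_exists => /forallP hall.
  move: h2; rewrite big1 // => j _; exact/eqP/negPn/hall.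
have Dp : D p = 2 by case: (h12 p) hp => ->.
exists p; split=> // j jp; case: (h12 j) => // Dj.
move: h2; rewrite (bigD1 p) //= (bigD1 j) /=; last by rewrite jp.
have : 0 <= \prod_(i | (i != p) && (i != j)) D i by apply: prodr_ge0 => i _; exact: h0.
rewrite Dp Dj; move: (\prod_(i | (i != p) && (i != j)) D i) => y; lia.
Qed.

Lemma LmxE {d : nat} (p : 'I_d) (r : 'I_d -> int) a b :
  Lmx p r a b = (a == b)%:R + (b < p)%N%:R * r b * (a == p)%:R.
Proof.
by rewrite -[Lmx p r]mul1mx /Lmx /Delta (mulE_sum _ _ (fun j : 'I_d => (j < p)%N)) !oneE.
Qed.

Lemma MmxE {d : nat} (p : 'I_d) (r : 'I_d -> int) a b :
  Mmx p r a b = (a == b)%:R + (b < p)%N%:R * r b * (a == ord_last p)%:R.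
Proof.
by rewrite -[Mmx p r]mul1mx /Mmx /Delta (mulE_sum _ _ (fun j : 'I_d => (j < p)%N)) !oneE.
Qed.

Lemma DmxE {d : nat} (p : 'I_d) (X : 'M[int]_d) a b :
  (X *m Dmx p) a b = X a b + (b == p)%:R * X a p.
Proof. by rewrite /Dmx /Delta -[delta_mx p p]scale1r mulE2 mulr1. Qed.

Lemma DmxE1 {d : nat} (p : 'I_d) a b :
  Dmx p a b = (a == b)%:R + (b == p)%:R * (a == p)%:R.
Proof. by rewrite -[Dmx p]mul1mx DmxE !oneE. Qed.

Lemma swapLE {d : nat} (i j : 'I_d) (X : 'M[int]_d) a b :
  (Iswap i j *m X) a b = X (tperm i j a) b.
Proof. by rewrite /Iswap xcolE mul1mx -xrowE /xrow /row_perm mxE. Qed.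

Lemma mxprod_gprod {d : nat} (s : seq 'M[int]_d) :
  mxprod (fun i : 'I_(size s) => nth 1%:M s i) = gprod s.
Proof.
rewrite /mxprod; elim: s => [|M s IH] /=; first by rewrite big_ord0.
by rewrite big_ord_recl /= -IH.
Qed.

Lemma int01 (x : int) : 0 <= x -> x < 1 -> x = 0.
Proof. lia. Qed.
Lemma int02 (x : int) : 0 <= x -> x < 2 -> x = 0 \/ x = 1.
Proof. lia. Qed.

Lemma oeq {d : nat} (x y : 'I_d) : (x == y) = (x == y :> nat).
Proof. by []. Qed.

Unset Implicit Arguments. Set Strict Implicit.

Theorem proposition3p4 (d : nat) (B : 'M[int]_d) :
  `|\det B| = 2 ->
  exists (p : 'I_d) (n0 m0 : nat) (r : 'I_d -> int),
    (forall j : 'I_d, r j = 0 \/ r j = 1) /\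
    (forall j : 'I_d, (p <= j)%N -> r j = 0) /\
    (exists V : 'M[int]_d, inMfrak V /\ B = Lmx p r *m Dmx p *m V) /\
    (exists U : 'M[int]_d, inMfrak U /\
       B = Iswap p (ord_last p) *m Mmx p r *m Dmx (ord_last p) *m U) /\
    (exists (Vs : 'I_n0 -> 'M[int]_d) (Us : 'I_m0 -> 'M[int]_d),
       (forall i, inGfrak (Vs i)) /\ (forall i, inGfrak (Us i)) /\
       B = mxprod Vs *m Dmx (ord_last p) *m mxprod Us).
Proof.
move=> hdet.
have [Q [gQ IQ]] := loop (leqnn d) B.
set H := B *m Q in IQ.
have trig : forall m l : 'I_d, (m < l)%N -> H m l = 0.
  by move=> m l ml; exact: (IQ m l (ltn_ord m)).1.
have dge : forall i : 'I_d, 0 <= H i i by move=> i; exact: (IQ i i (ltn_ord i)).2.1.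
have detH : \prod_i H i i = 2.
  have hpos : 0 <= \det H by rewrite det_trig; [apply: prodr_ge0 => i _|apply/is_trig_mxP].
  have : `|\det H| = 2.
    rewrite det_mulmx normrM hdet.
    by case: (gen_det gQ) => ->; rewrite ?normrN normr1 mulr1.
  by rewrite ger0_norm // det_trig //; apply/is_trig_mxP.
have [p [Hp Hother]] := diag2 dge detH.
pose r (j : 'I_d) : int := if (j < p)%N then H p j else 0.
have offd : forall m l : 'I_d, (l < m)%N -> m != p -> H m l = 0.
  move=> m l lm mp; have [_ [_ h]] := IQ m l (ltn_ord m).
  by move: (h lm); rewrite Hother // => /(_ isT) /andP [h1 h2]; apply: int01.
have r01 : forall j, r j = 0 \/ r j = 1.
  move=> j; rewrite /r; case: ifP => jp; last by left.
  have [_ [_ h]] := IQ p j (ltn_ord p).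
  by move: (h jp); rewrite Hp => /(_ isT) /andP [h1 h2]; apply: int02.
have r0 : forall j : 'I_d, (p <= j)%N -> r j = 0.
  by move=> j; rewrite /r leqNgt => /negPf ->.
have HL : H = Lmx p r *m Dmx p.
  apply/matrixP => a b; rewrite DmxE !LmxE ltnn.
  case: (a =P p) => [->|/eqP ap].
    rewrite !oeq.
    case: (ltngtP b p) => h.
    - by rewrite /r h /=; ring.
    - by rewrite trig // /=; ring.
    - have -> : b = p by apply: val_inj.
      by rewrite Hp /=; ring.
  rewrite /=.
  case: (ltngtP a b) => h.
  - by rewrite trig // oeq ?(ltn_eqF h) /=; ring.
  - by rewrite offd // oeq ?(gtn_eqF h) /=; ring.
  - have -> : b = a by apply: val_inj.
    by rewrite Hother // eqxx /=; ring.
have [Q' [gQ' eQ']] := gen_inv gQ.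
have BV : B = Lmx p r *m Dmx p *m Q' by rewrite -HL /H -mulmxA eQ' mulmx1.
set L := ord_last p.
have pL : (p <= L)%N by rewrite /=; have := ltn_ord p; lia.
pose P := Iswap p L.
have gP : gen P by apply: genG; right; right; exists p, L.
have sA : forall a, (tperm p L a == L) = (a == p).
  by move=> a; rewrite -[X in _ == X](tpermL p L) (inj_eq perm_inj).
have sI : forall a b, (tperm p L a == tperm p L b) = (a == b).
  by move=> a b; rewrite (inj_eq perm_inj).
have DL : P *m Dmx L *m P = Dmx p.
  apply/matrixP => a b; rewrite mulEsw swapLE !DmxE1 sA sI sA //.
have [s1 [hs1 e1]] := genM (gen_sum (i := p) (P := fun j : 'I_d => (j < p)%N) r (ltnn p)) gP.
have [s2 [hs2 e2]] := genM gP gQ'.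
exists p, (size s1), (size s2), r; split=> //; split=> //; split.
  by exists Q'; split=> //; apply: gen_det.
split.
  exists (P *m Q'); split; first by apply: gen_det; apply: genM.
  have conj : P *m Mmx p r *m Dmx L *m P = Lmx p r *m Dmx p.
    have Lp : (L < p)%N = false by rewrite ltnNge pL.
    have tb : forall b, (tperm p L b < p)%N%:R * r (tperm p L b) = (b < p)%N%:R * r b.
      by move=> b; case: tpermP => [->|->|//]; rewrite Lp ltnn !mul0r.
    apply/matrixP => a b; rewrite /P mulEsw !DmxE !swapLE !MmxE !LmxE !sA sI tb Lp ltnn.
    by rewrite /=; ring.
  by rewrite BV -conj !mulmxA.
exists (fun i => nth 1%:M s1 i), (fun i => nth 1%:M s2 i); split; last split.
- by move=> i; apply: hs1; apply: mem_nth.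
- by move=> i; apply: hs2; apply: mem_nth.
rewrite !mxprod_gprod -e1 -e2 BV -DL /Lmx /Delta.
by rewrite !mulmxA.
Qed.
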